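(* Let $\Sigma$ be an alphabet. The set $\mathrm{RevL}(\mathbb{F}_2,\Sigma)$ is closed under the Boolean operations (complementation in $\Sigma^*$, finite intersection and finite union).
   Context: $\mathbb{F}_2$ is the two-element field. For a semiring $S$ and finite nonempty alphabet $\Sigma$, a series is a map $r\colon\Sigma^*\to S$ with value $(r,w)$ and support $\mathrm{supp}(r)=\{w\mid(r,w)\neq0\}$. A weighted automaton over $S$ and $\Sigma$ is $\mathcal{A}=(Q,\sigma,\iota,\tau)$ with $Q$ finite, $\sigma\colon Q\times\Sigma\times Q\to S$, $\iota,\tau\colon Q\to S$; a run on $w=a_1\cdots a_t$ is $q_0a_1q_1\cdots a_tq_t$ with all $\sigma(q_{k-1},a_k,q_k)\neq0$, of weight $\iota(q_0)\sigma(q_0,a_1,q_1)\cdots\sigma(q_{t-1},a_t,q_t)\tau(q_t)$, and $(\|\mathcal{A}\|,w)$ is the sum of weights of all runs on $w$. $\mathcal{A}$ is reversible if for all $p,p',q,q'\in Q$, $a\in\Sigma$: $\sigma(p,a,q)\neq0\neq\sigma(p,a,q')$ implies $q=q'$, and $\sigma(p,a,q)\neq0\neq\sigma(p',a,q)$ implies $p=p'$. $\mathrm{RevL}(S,\Sigma)$ is the set of supports of series realised by reversible weighted automata over $S$ and $\Sigma$. *)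

(* Defs.v *)
From HB Require Import structures.
From mathcomp Require Import all_boot all_algebra.
Set Implicit Arguments. Unset Strict Implicit. Unset Printing Implicit Defensive.
Import GRing.Theory.
Local Open Scope ring_scope.

Record wautomaton (S : pzSemiRingType) (Sigma : finType) (Q : finType) := WAutomaton {
  wa_sigma : Q -> Sigma -> Q -> S;
  wa_iota  : Q -> S;
  wa_tau   : Q -> S }.

Section WA.
Variables (S : pzSemiRingType) (Sigma : finType) (Q : finType).
Variable A : wautomaton S Sigma Q.

Definition is_run (w : seq Sigma) (r : {ffun 'I_(size w).+1 -> Q}) : bool :=
  [forall k : 'I_(size w),
     wa_sigma A (r (widen_ord (leqnSn _) k)) (tnth (in_tuple w) k) (r (lift ord0 k)) != 0].

Definition run_weight (w : seq Sigma) (r : {ffun 'I_(size w).+1 -> Q}) : S :=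
  wa_iota A (r ord0) *
  (\prod_(k < size w)
      wa_sigma A (r (widen_ord (leqnSn _) k)) (tnth (in_tuple w) k) (r (lift ord0 k))) *
  wa_tau A (r ord_max).

Definition behavior (w : seq Sigma) : S :=
  \sum_(r : {ffun 'I_(size w).+1 -> Q} | is_run r) run_weight r.

Definition support_lang : pred (seq Sigma) := fun w => behavior w != 0.

Definition reversible : Prop :=
  (forall p q q' a, wa_sigma A p a q != 0 -> wa_sigma A p a q' != 0 -> q = q') /\
  (forall p p' q a, wa_sigma A p a q != 0 -> wa_sigma A p' a q != 0 -> p = p').
End WA.

Definition RevL (S : pzSemiRingType) (Sigma : finType) (L : pred (seq Sigma)) : Prop :=
  exists (Q : finType) (A : wautomaton S Sigma Q),
    reversible A /\ forall w, L w = support_lang A w.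

(* Main.v *)
Require Import Defs.
From mathcomp Require Import all_boot all_algebra ring.
Set Implicit Arguments. Unset Strict Implicit. Unset Printing Implicit Defensive.
Import GRing.Theory.
Local Open Scope ring_scope.

Section Gen.
Variables (F : fieldType) (Sigma : finType).

Lemma behaviorE (Q : finType) (A : wautomaton F Sigma Q) w :
  behavior A w = \sum_(r : {ffun 'I_(size w).+1 -> Q}) run_weight A r.
Proof.
rewrite /behavior; symmetry; rewrite (bigID (@is_run _ _ _ A w)) /= [X in _ + X]big1 ?addr0 //.
move=> r /forallPn [k]; rewrite negbK => /eqP H.
by rewrite /run_weight (bigD1 k) //= H !mul0r mulr0 mul0r.
Qed.

Definition prodA (Q1 Q2 : finType) (A1 : wautomaton F Sigma Q1) (A2 : wautomaton F Sigma Q2) :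
  wautomaton F Sigma (Q1 * Q2)%type :=
  @WAutomaton F Sigma (Q1 * Q2)%type (fun p a q => wa_sigma A1 p.1 a q.1 * wa_sigma A2 p.2 a q.2)
             (fun p => wa_iota A1 p.1 * wa_iota A2 p.2)
             (fun p => wa_tau A1 p.1 * wa_tau A2 p.2).

Lemma behavior_prod (Q1 Q2 : finType) (A1 : wautomaton F Sigma Q1) (A2 : wautomaton F Sigma Q2) w :
  behavior (prodA A1 A2) w = behavior A1 w * behavior A2 w.
Proof.
rewrite !behaviorE mulr_suml.
rewrite [RHS](eq_bigr _ (fun r1 _ => mulr_sumr _ _ _ _)).
rewrite pair_bigA /=.
rewrite (reindex (fun p : ({ffun 'I_(size w).+1 -> Q1} * {ffun 'I_(size w).+1 -> Q2})%type =>
                    [ffun k => (p.1 k, p.2 k)])) /=; last first.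
  apply: onW_bij.
  exists (fun r : {ffun 'I_(size w).+1 -> (Q1 * Q2)%type} => ([ffun k => (r k).1], [ffun k => (r k).2])).
    by move=> [r1 r2]; congr pair; apply/ffunP => k; rewrite !ffunE.
  by move=> r; apply/ffunP => k; rewrite !ffunE; case: (r k).
apply: eq_bigr => [[r1 r2]] _.
rewrite /run_weight /= !ffunE /=.
under eq_bigr => k _ do rewrite !ffunE /=.
rewrite big_split /=.
ring.
Qed.


Definition optA (Q : finType) (A : wautomaton F Sigma Q) : wautomaton F Sigma (option Q) :=
  @WAutomaton F Sigma (option Q)
    (fun p a q => match p, q with
                  | Some p, Some q => wa_sigma A p a q
                  | None, None => 1
                  | _, _ => 0 end)
    (fun p => if p is Some p then wa_iota A p else 1)
    (fun p => if p is Some p then wa_tau A p else 1).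

Lemma const_some n (T : finType) (r : {ffun 'I_n.+1 -> option T}) :
  (forall k : 'I_n, (r (widen_ord (leqnSn n) k) == None) = (r (lift ord0 k) == None)) ->
  forall j, (r j == None) = (r ord0 == None).
Proof.
move=> H [m Hm]; elim: m Hm => [|m IH] Hm.
  by congr (r _ == None); apply: val_inj.
have Hmn : (m < n)%N by [].
have -> : Ordinal Hm = lift ord0 (Ordinal Hmn) by apply: val_inj.
rewrite -H -(IH (ltnW Hm)); congr (r _ == None); exact: val_inj.
Qed.

Lemma behavior_opt (Q : finType) (A : wautomaton F Sigma Q) w :
  behavior (optA A) w = behavior A w + 1.
Proof.
rewrite !behaviorE.
set n := size w.
pose h := fun r1 : {ffun 'I_n.+1 -> Q} => [ffun k => Some (r1 k)] : {ffun 'I_n.+1 -> option Q}.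
pose r0 := [ffun k => None] : {ffun 'I_n.+1 -> option Q}.
have hinj : {in setT &, injective h}.
  move=> x y _ _ /ffunP Hxy; apply/ffunP => k; move: (Hxy k); rewrite !ffunE.
  by case.
rewrite (bigID (fun r => r \in [set h x | x in setT])) /=.
rewrite big_imset //=.
have -> : \sum_(i in setT) @run_weight _ _ _ (optA A) w (h i) = \sum_i @run_weight _ _ _ A w i.
  apply: eq_big => [x|x _]; first by rewrite in_setT.
  rewrite /run_weight /= !ffunE /=.
  by under eq_bigr => k _ do rewrite !ffunE /=.
congr (_ + _).
have r0n : r0 \notin [set h x | x in setT].
  apply/imsetP => -[x _] /ffunP /(_ ord0); by rewrite !ffunE.
rewrite (bigD1 r0) //= big1 ?addr0.
  rewrite /run_weight /= !ffunE /= big1 ?mulr1 //.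
  by move=> k _; rewrite !ffunE.
move=> r /andP [rni rn0].
have [k0 Hk0] : exists k, r k == None.
  apply/existsP; apply: contraR rni; rewrite negb_exists => /forallP Hall.
  move: (Hall ord0); case E : (r ord0) => [q0|] // _.
  apply/imsetP; exists [ffun k => odflt q0 (r k)] => //.
  apply/ffunP => k; rewrite !ffunE; move: (Hall k); by case: (r k).
have [j Hj] : exists j, r j != None.
  apply/existsP; apply: contraR rn0; rewrite negb_exists => /forallP Hall.
  apply/eqP/ffunP => k; rewrite ffunE; move: (Hall k); by rewrite negbK => /eqP.
have [k Hk] : exists k : 'I_n, (r (widen_ord (leqnSn n) k) == None) != (r (lift ord0 k) == None).
  apply/existsP; rewrite -negb_forall; apply/negP => /forallP Hall.
  have Hc := const_some (fun k => eqP (Hall k)).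
  by move: Hj; rewrite Hc -(Hc k0) Hk0.
rewrite /run_weight (bigD1 k) //=.
move: Hk; case: (r (widen_ord _ k)) => [p|]; case: (r (lift ord0 k)) => [q|] //= _;
  by rewrite !mul0r ?mulr0 ?mul0r.
Qed.

End Gen.

Section F2.
Variable Sigma : finType.
Notation F := 'F_2.

Lemma F2_add1 (x : F) : (x + 1 != 0) = (x == 0).
Proof. by case: x => [[|[|m]] Hm]. Qed.

Lemma RevL_ext (L L' : pred (seq Sigma)) : L =1 L' -> RevL F L -> RevL F L'.
Proof. move=> E [Q [A [HA HL]]]; exists Q, A; split => // w; by rewrite -E. Qed.

Lemma RevL_compl (L : pred (seq Sigma)) : RevL F L -> RevL F [pred w | ~~ L w].
Proof.
move=> [Q [A [[H1 H2] HL]]]; exists (option Q), (optA A); split.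
  split.
    move=> [p|] [q|] [q'|] a //=; rewrite ?eqxx //.
      by move=> Ha Hb; rewrite (H1 _ _ _ _ Ha Hb).
  move=> [p|] [p'|] [q|] a //=; rewrite ?eqxx //.
    by move=> Ha Hb; rewrite (H2 _ _ _ _ Ha Hb).
move=> w; rewrite /support_lang behavior_opt F2_add1 /= HL /support_lang.
by rewrite negbK.
Qed.

Lemma RevL_and (L1 L2 : pred (seq Sigma)) :
  RevL F L1 -> RevL F L2 -> RevL F [pred w | L1 w && L2 w].
Proof.
move=> [Q1 [A1 [[H1 H2] HL1]]] [Q2 [A2 [[G1 G2] HL2]]].
exists (Q1 * Q2)%type, (prodA A1 A2); split.
  split.
    move=> [p1 p2] [q1 q2] [q1' q2'] a /=; rewrite !mulf_eq0 !negb_or.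
    move=> /andP [Ha Hb] /andP [Hc Hd].
    by rewrite (H1 _ _ _ _ Ha Hc) (G1 _ _ _ _ Hb Hd).
  move=> [p1 p2] [p1' p2'] [q1 q2] a /=; rewrite !mulf_eq0 !negb_or.
  move=> /andP [Ha Hb] /andP [Hc Hd].
  by rewrite (H2 _ _ _ _ Ha Hc) (G2 _ _ _ _ Hb Hd).
move=> w; rewrite /support_lang behavior_prod mulf_eq0 negb_or /= HL1 HL2.
by [].
Qed.

Lemma RevL_false : RevL F [pred w : seq Sigma | false].
Proof.
exists unit.
exists (@WAutomaton F Sigma unit (fun _ _ _ => 0) (fun _ => 0) (fun _ => 0)).
split.
  by split => [[] [] [] | [] [] []].
move=> w; rewrite /support_lang behaviorE big1 ?eqxx // => r _.
by rewrite /run_weight /= !mul0r.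
Qed.

Lemma RevL_true : RevL F [pred w : seq Sigma | true].
Proof. exact: RevL_ext (RevL_compl RevL_false). Qed.

Lemma RevL_all (I : finType) (L : I -> pred (seq Sigma)) (s : seq I) :
  (forall i, RevL F (L i)) -> RevL F [pred w | all (fun i => L i w) s].
Proof.
move=> HL; elim: s => [|i s IH] /=; first exact: RevL_true.
exact: RevL_and.
Qed.

End F2.

Local Close Scope ring_scope.

Theorem proposition6 (Sigma : finType) (Sigma_nonempty : 0 < #|Sigma|) :
  (forall L : pred (seq Sigma),
     RevL 'F_2 L -> RevL 'F_2 [pred w | ~~ L w]) /\
  (forall (I : finType) (L : I -> pred (seq Sigma)),
     (forall i, RevL 'F_2 (L i)) -> RevL 'F_2 [pred w | [forall i, L i w]]) /\
  (forall (I : finType) (L : I -> pred (seq Sigma)),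
     (forall i, RevL 'F_2 (L i)) -> RevL 'F_2 [pred w | [exists i, L i w]]).
Proof.
have Hall : forall (I : finType) (L : I -> pred (seq Sigma)),
     (forall i, RevL 'F_2 (L i)) -> RevL 'F_2 [pred w | [forall i, L i w]].
  move=> I L HL; apply: RevL_ext (RevL_all (enum I) HL) => w /=.
  apply/allP/forallP => H i; first by apply: H; rewrite mem_enum.
  by move=> _; apply: H.
split; first exact: RevL_compl.
split; first exact: Hall.
move=> I L HL.
have := RevL_compl (Hall I (fun i => [pred w | ~~ L i w]) (fun i => RevL_compl (HL i))).
apply: RevL_ext => w /=.
by rewrite negb_forall; apply: eq_existsb => i; rewrite /= negbK.
Qed.
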